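(* Let $S,\alpha$ be real symmetric $n\times n$ matrices and let $V(t)$ be the matrix-valued solution of $\frac{dV}{dt}=[S,V]+\alpha$ with $V(0)=0$. Then $\mathrm{Tr}\,V(t)^2\ge t^2\,\mathrm{Tr}\,\alpha^2$ for all real $t$. *)

(* Defs.v *)
From mathcomp Require Import all_boot all_order all_algebra.
From mathcomp Require Import all_classical all_reals all_analysis.

(* Main.v *)
Require Import Defs.
From mathcomp Require Import all_boot all_order all_algebra.
From mathcomp Require Import all_classical all_reals all_analysis.
Import Order.TTheory GRing.Theory Num.Theory.
Local Open Scope ring_scope.

Section Helpers.
Variable R : realType.

Lemma sumf_der (m : nat) (h : 'I_m -> R -> R) (dh : 'I_m -> R) (x : R) :
  (forall i, is_derive x (1:R) (h i) (dh i)) ->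
  is_derive x (1:R) (fun y => \sum_(i < m) h i y) (\sum_(i < m) dh i).
Proof.
move=> H; have := is_derive_sum H; by rewrite fct_sumE.
Qed.

Lemma mulf_der (f g : R -> R) (df dg : R) (x : R) :
  is_derive x (1:R) f df -> is_derive x (1:R) g dg ->
  is_derive x (1:R) (fun y => f y * g y) (df * g x + f x * dg).
Proof.
move=> Hf Hg; have := is_deriveM Hf Hg.
move=> H; apply: is_derive_eq H _.
by rewrite addrC [g x *: _]mulrC.
Qed.

Variable n : nat.

Lemma ent_der (M : R -> 'M[R]_n) (t : R) (D : 'M[R]_n) i j :
  is_derive t (1:R) M D -> is_derive t (1:R) (fun s => M s i j) (D i j).
Proof.
move=> [dM <-].
have dij := (derivable_mxP M t 1).1 dM i j.
apply: DeriveDef => //.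
by rewrite derive_mx // mxE.
Qed.

Lemma mx_der (M : R -> 'M[R]_n) (t : R) (D : 'M[R]_n) :
  (forall i j, is_derive t (1:R) (fun s => M s i j) (D i j)) -> is_derive t (1:R) M D.
Proof.
move=> H.
have dM : derivable M t 1.
  by apply/derivable_mxP => i j; case: (H i j).
apply: DeriveDef => //.
rewrite derive_mx //; apply/matrixP => i j; rewrite mxE.
by case: (H i j).
Qed.

Lemma tr_der (A B : R -> 'M[R]_n) (A' B' : 'M[R]_n) (t : R) :
  is_derive t (1:R) A A' -> is_derive t (1:R) B B' ->
  is_derive t (1:R) (fun s => \tr (A s *m B s)) (\tr (A' *m B t + A t *m B')).
Proof.
move=> HA HB.
rewrite /mxtrace.
have -> : (fun s => \sum_i (A s *m B s) i i) =
   (fun s => \sum_(i < n) \sum_(k < n) A s i k * B s k i).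
  by apply/funext => s; apply: eq_bigr => i _; rewrite mxE.
have -> : \sum_i (A' *m B t + A t *m B') i i =
   \sum_(i < n) \sum_(k < n) (A' i k * B t k i + A t i k * B' k i).
  apply: eq_bigr => i _; rewrite !mxE -big_split /=.
  by apply: eq_bigr => k _; rewrite ?mxE.
apply: sumf_der => i; apply: sumf_der => k.
by apply: mulf_der; apply: ent_der.
Qed.


Lemma trmx_der (A : R -> 'M[R]_n) (A' : 'M[R]_n) (t : R) :
  is_derive t (1:R) A A' -> is_derive t (1:R) (fun s => (A s)^T) (A'^T).
Proof.
move=> HA; apply: mx_der => i j.
have -> : (fun s => (A s)^T i j) = (fun s => A s j i).
  by apply/funext => s; rewrite mxE.
rewrite mxE; exact: ent_der.
Qed.

Lemma rev_der (A : R -> 'M[R]_n) (A' : R -> 'M[R]_n) (c t : R) :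
  (forall s, is_derive s (1:R) A (A' s)) ->
  is_derive t (1:R) (fun s => A (c - s)) (- A' (c - t)).
Proof.
move=> HA; apply: mx_der => i j.
have := @is_derive1_comp R (fun s => A s i j) (fun s => c - s) t (A' (c - t) i j) (-1).
rewrite mulrN1 mxE; apply.
  exact: ent_der.
apply: is_derive_eq (is_deriveB (is_derive_cst c t 1) (is_derive_id t 1)) _.
by rewrite sub0r.
Qed.

Lemma mono (f f' : R -> R) (a b : R) :
  (forall x, is_derive x (1:R) f (f' x)) -> a <= b ->
  (forall x, a <= x <= b -> 0 <= f' x) -> f a <= f b.
Proof.
move=> Hf ab Hp.
apply: (@ger0_derive1_ndecr R f a b) => //.
- move=> x xab; rewrite derive1E; have [_ ->] := Hf x; apply: Hp.
  move: xab; rewrite in_itv /=; case/andP => ax xb.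
  by rewrite !ltW.
- by apply: derivable_within_continuous => x _.
Qed.


Lemma lmul_der (C : 'M[R]_n) (A : R -> 'M[R]_n) (A' : 'M[R]_n) (t : R) :
  is_derive t (1:R) A A' -> is_derive t (1:R) (fun s => C *m A s) (C *m A').
Proof.
move=> HA; apply: mx_der => i j.
have -> : (fun s => (C *m A s) i j) = (fun s => \sum_(k < n) C i k * A s k j).
  by apply/funext => s; rewrite mxE.
rewrite mxE; apply: sumf_der => k.
have := @mulf_der (cst (C i k)) (fun s => A s k j) 0 (A' k j) t
  (is_derive_cst _ _ _) (ent_der _ _ _ k j HA).
by rewrite mul0r add0r.
Qed.

Lemma rmul_der (C : 'M[R]_n) (A : R -> 'M[R]_n) (A' : 'M[R]_n) (t : R) :
  is_derive t (1:R) A A' -> is_derive t (1:R) (fun s => A s *m C) (A' *m C).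
Proof.
move=> HA; apply: mx_der => i j.
have -> : (fun s => (A s *m C) i j) = (fun s => \sum_(k < n) A s i k * C k j).
  by apply/funext => s; rewrite mxE.
rewrite mxE; apply: sumf_der => k.
have := @mulf_der (fun s => A s i k) (cst (C k j)) (A' i k) 0 t
  (ent_der _ _ _ i k HA) (is_derive_cst _ _ _).
by rewrite mulr0 addr0.
Qed.


Lemma min0 (f f' : R -> R) :
  (forall x, is_derive x (1:R) f (f' x)) ->
  (forall x, 0 <= x -> 0 <= f' x) -> (forall x, x <= 0 -> f' x <= 0) ->
  forall x, f 0 <= f x.
Proof.
move=> Hf Hp Hn x; case: (leP 0 x) => hx.
  apply: (mono _ _ _ _ Hf hx) => y /andP[y0 _]; exact: Hp.
suff : - f x <= - f 0 by rewrite lerN2.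
apply: (mono (fun y => - f y) (fun y => - f' y) x 0 _ (ltW hx)).
- by move=> y /andP[_ y0]; rewrite oppr_ge0 Hn.
Qed.

Lemma sgn (f f' : R -> R) :
  (forall x, is_derive x (1:R) f (f' x)) -> (forall x, 0 <= f' x) ->
  (forall x, 0 <= x -> f 0 <= f x) /\ (forall x, x <= 0 -> f x <= f 0).
Proof.
move=> Hf Hp; split=> x hx.
  by apply: (mono _ _ _ _ Hf hx) => y _; exact: Hp.
by apply: (mono _ _ _ _ Hf hx) => y _; exact: Hp.
Qed.

End Helpers.

Section Alg.
Variable R : realType.
Variable n : nat.
Implicit Types X Y S : 'M[R]_n.

Definition ip X Y := \tr (X^T *m Y).
Definition Lc S X := S *m X - X *m S.

Lemma ipC X Y : ip X Y = ip Y X.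
Proof. by rewrite /ip -mxtrace_tr trmx_mul trmxK. Qed.

Lemma ip_self X : 0 <= ip X X.
Proof.
rewrite /ip /mxtrace; apply: sumr_ge0 => i _; rewrite mxE.
by apply: sumr_ge0 => k _; rewrite mxE -expr2 sqr_ge0.
Qed.

Lemma ipL S X Y : S^T = S -> ip (Lc S X) Y = ip X (Lc S Y).
Proof.
move=> hS; rewrite /ip /Lc linearB /= !trmx_mul hS.
rewrite mulmxBl mulmxBr !raddfB /=.
rewrite -!mulmxA [\tr (X^T *m (Y *m S))]mxtrace_mulC !mulmxA.
by rewrite [\tr (S *m _ *m Y)]mxtrace_mulC mulmxA.
Qed.

Lemma ipL0 S X : X^T = X -> ip (Lc S X) X = 0.
Proof.
move=> hX; rewrite /ip /Lc linearB /= !trmx_mul hX.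
by rewrite mulmxBl raddfB /= [\tr (S^T *m _ *m _)]mxtrace_mulC mulmxA subrr.
Qed.
End Alg.

Arguments ip {R n}.
Arguments Lc {R n}.

Theorem lemma9 (R : realType) (n : nat) (S alpha : 'M[R]_n)
  (V : R -> 'M[R]_n)
  (hS : S^T = S) (halpha : alpha^T = alpha)
  (hV : forall t : R, is_derive t 1 V (S *m V t - V t *m S + alpha))
  (hV0 : V 0 = 0) :
  forall t : R, t ^+ 2 * \tr (alpha *m alpha) <= \tr (V t *m V t).
Proof.
pose U t := S *m V t - V t *m S + alpha.
have hU : forall t, is_derive t (1:R) U (Lc S (U t)).
  move=> t.
  have h1 := lmul_der _ _ S V _ t (hV t).
  have h2 := rmul_der _ _ S V _ t (hV t).
  have := is_deriveD (is_deriveB h1 h2) (is_derive_cst alpha t 1).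
  by rewrite addr0.
have hLU : forall t, is_derive t (1:R) (fun s => Lc S (U s)) (Lc S (Lc S (U t))).
  move=> t.
  have h1 := lmul_der _ _ S U _ t (hU t).
  have h2 := rmul_der _ _ S U _ t (hU t).
  exact: (is_deriveB h1 h2).
have U0 : U 0 = alpha by rewrite /U hV0 mulmx0 mul0mx subrr add0r.
have step1 : forall c, ip alpha (U c) = ip (U (c/2)) (U (c/2)).
  move=> c.
  pose g s := ip (U s) (U (c - s)).
  have hg : forall s, is_derive s (1:R) g 0.
    move=> s.
    have hT := trmx_der _ _ U _ s (hU s).
    have hr := rev_der _ _ U (fun s => Lc S (U s)) c s hU.
    have := tr_der _ _ (fun s => (U s)^T) (fun s => U (c - s)) _ _ s hT hr.
    move=> H; apply: is_derive_eq H _.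
    rewrite mulmxN raddfD raddfN /=.
    have := ipL _ _ S (U s) (U (c - s)) hS; rewrite /ip => ->.
    by rewrite subrr.
  have := @is_derive_0_is_cst _ g 0 (c/2) hg.
  have hc : c - c/2 = c/2 by rewrite {1}(splitr c) addrK.
  by rewrite /g subr0 U0 hc.
have step2 : forall s, ip alpha alpha <= ip (U s) (U s).
  pose K s := ip (Lc S (U s)) (U s).
  have hK : forall s, is_derive s (1:R) K
      (ip (Lc S (U s)) (Lc S (U s)) + ip (Lc S (U s)) (Lc S (U s))).
    move=> s.
    have := tr_der _ _ (fun s => (Lc S (U s))^T) U _ _ s
      (trmx_der _ _ _ _ s (hLU s)) (hU s).
    move=> H; apply: is_derive_eq H _.
    rewrite raddfD /=; congr (_ + _).
    exact: (ipL _ _ S (Lc S (U s)) (U s) hS).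
  have K0 : K 0 = 0 by rewrite /K U0 ipL0.
  have [Kp Kn] := sgn _ K _ hK (fun s => addr_ge0 (ip_self _ _ _) (ip_self _ _ _)).
  pose N s := ip (U s) (U s).
  have hN : forall s, is_derive s (1:R) N (K s + K s).
    move=> s.
    have := tr_der _ _ (fun s => (U s)^T) U _ _ s
      (trmx_der _ _ _ _ s (hU s)) (hU s).
    move=> H; apply: is_derive_eq H _.
    rewrite raddfD /=; congr (_ + _).
    exact: (ipC _ _ (U s) (Lc S (U s))).
  move=> s; have h := min0 _ N (fun s => K s + K s) hN.
  suff : N 0 <= N s by rewrite /N U0.
  apply: h.
  - by move=> x hx; apply: addr_ge0; rewrite -K0 Kp.
  - by move=> x hx; rewrite -[0](addr0 0) lerD // -K0 Kn.
set a := \tr (alpha *m alpha).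
have hF : forall t, is_derive t (1:R) (fun t => \tr (V t *m alpha) - t * a)
    (\tr (U t *m alpha) - a).
  move=> t.
  have h1 := tr_der _ _ V (cst alpha) _ 0 t (hV t) (is_derive_cst alpha t 1).
  have h2 := mulf_der _ _ _ _ _ t (is_derive_id t (1:R)) (is_derive_cst a t 1).
  have := is_deriveB h1 h2.
  move=> H; apply: is_derive_eq H _.
  by rewrite mulmx0 addr0 mul1r mulr0 addr0.
have Fd : forall t, a <= \tr (U t *m alpha).
  move=> t.
  have := step2 (t/2); rewrite -step1 /ip halpha [\tr (alpha *m U t)]mxtrace_mulC.
  by [].
have [Fp Fn] := sgn _ _ _ hF (fun t => ltac:(by rewrite subr_ge0 Fd)).
have F0 : \tr (V 0 *m alpha) - 0 * a = 0 by rewrite hV0 mul0mx mxtrace0 mul0r subr0.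
have eqVU : forall t, \tr (V t *m U t) = \tr (V t *m alpha).
  move=> t; rewrite /U mulmxDr mulmxBr !raddfD ?raddfB raddfN /=.
  rewrite [\tr (V t *m (V t *m S))]mxtrace_mulC -mulmxA.
  by rewrite subrr add0r.
have hD : forall t, is_derive t (1:R) (fun t => \tr (V t *m V t) - t * t * a)
    ((\tr (V t *m alpha) - t * a) + (\tr (V t *m alpha) - t * a)).
  move=> t.
  have h1 := tr_der _ _ V V _ _ t (hV t) (hV t).
  have h2 := mulf_der _ _ _ _ _ t (is_derive_id t (1:R)) (is_derive_id t (1:R)).
  have h3 := mulf_der _ _ _ _ _ t h2 (is_derive_cst a t 1).
  have := is_deriveB h1 h3.
  move=> H; apply: is_derive_eq H _.
  rewrite raddfD /= mxtrace_mulC eqVU mulr0 addr0 mul1r mulr1.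
  by rewrite mulrDl opprD addrACA.
move=> t.
have h := min0 _ _ _ hD.
suff : \tr (V 0 *m V 0) - 0 * 0 * a <= \tr (V t *m V t) - t * t * a.
  by rewrite hV0 mul0mx mxtrace0 !mul0r subr0 subr_ge0 expr2.
apply: h.
- by move=> x hx; apply: addr_ge0; move: (Fp x hx) => /=; rewrite F0.
- move=> x hx; rewrite -[0](addr0 0) lerD //; move: (Fn x hx) => /=; by rewrite F0.
Qed.
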